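(* Let $\ell_n>0$, $\sigma_{n,0}>0$, $\sigma_{n,1}\ge0$, $\sigma_{n,-1}\ge0$, $\kappa_n\in\mathbb R$ for $n\in\mathbb N$, and assume $$\liminf_{n\to\infty}\sigma_{n,0}>0,\qquad \limsup_{n\to\infty}\sigma_{n,1}\sqrt{\ell_{n+1}/\ell_n}<\infty,\qquad \limsup_{n\to\infty}\sigma_{n,-1}\sqrt{\ell_{n-1}/\ell_n}<\infty,\qquad \limsup_{n\to\infty}\frac{|\kappa_n|}{\sqrt{\ell_n}}<\infty .$$ If a real sequence $(x_n)_{n\in\mathbb N}$ (with some $x_0\in\mathbb R$) satisfies $$\ell_n = x_n\big(\sigma_{n,1}x_{n+1}+\sigma_{n,0}x_n+\sigma_{n,-1}x_{n-1}\big)+\kappa_n x_n,\qquad n\in\mathbb N,$$ then $$\liminf_{n\to\infty}\frac{x_n}{\sqrt{\ell_n}}>-\infty\iff\limsup_{n\to\infty}\frac{x_n}{\sqrt{\ell_n}}<\infty .$$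
   Context: $\mathbb N=\{1,2,3,\dots\}$. The sequence $(x_n)$ need not be positive. *)

(* Defs.v *)
From Stdlib Require Import Reals.
Open Scope R_scope.

(* Extended-real liminf/limsup conditions, written out explicitly
   (Stdlib has no liminf/limsup in [-oo,+oo]).  *)

Definition liminf_pos (a : nat -> R) : Prop :=
  exists c, 0 < c /\ exists N, forall n, (N <= n)%nat -> c <= a n.

Definition limsup_finite (a : nat -> R) : Prop :=
  exists M, exists N, forall n, (N <= n)%nat -> a n <= M.

Definition liminf_finite (a : nat -> R) : Prop :=
  exists m, exists N, forall n, (N <= n)%nat -> m <= a n.

(* Main.v *)
Require Import Defs.
From Stdlib Require Import Reals Lra Lia.
Open Scope R_scope.

Lemma key (A B K c0 m y y1 y2 a b kk s0: R) : 0<c0 -> c0 <= s0 -> 0<=a -> a<=A ->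
  0<=b -> b<=B -> Rabs kk <= K -> 0<=m -> -m <= y1 -> -m <= y2 ->
  1 = y*(a*y1 + s0*y + b*y2) + kk*y -> y <= Rmax 1 ((1 + (A+B)*m + K)/c0).
Proof.
  intros Hc Hs Ha HA Hb HB Hk Hm H1 H2 E.
  assert (Hk2 : -K <= kk) by (pose proof (Rle_abs (-kk)); rewrite Rabs_Ropp in *; lra).
  destruct (Rle_dec y 1) as [Hy|Hy].
  - apply Rle_trans with 1; [exact Hy | apply Rmax_l].
  - apply Rle_trans with ((1 + (A+B)*m + K)/c0); [|apply Rmax_r].
    assert (P1 : a*y1 >= -(A*m)) by nra.
    assert (P2 : b*y2 >= -(B*m)) by nra.
    assert (P3 : y*(a*y1) >= y*(-(A*m))) by nra.
    assert (P4 : y*(b*y2) >= y*(-(B*m))) by nra.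
    assert (P5 : kk*y >= -K*y) by nra.
    assert (P6 : s0*y*y >= c0*y*y) by nra.
    assert (c0*y <= 1 + (A+B)*m + K) by nra.
    apply Rmult_le_reg_l with c0; [lra|].
    replace (c0 * ((1 + (A + B) * m + K) / c0)) with (1 + (A + B) * m + K) by (field; lra).
    lra.
Qed.

Lemma dir
  (l s0 s1 sm1 k x : nat -> R)
  (hl : forall n, (1 <= n)%nat -> 0 < l n)
  (hs0 : forall n, (1 <= n)%nat -> 0 < s0 n)
  (hs1 : forall n, (1 <= n)%nat -> 0 <= s1 n)
  (hsm1 : forall n, (1 <= n)%nat -> 0 <= sm1 n)
  (A0 : liminf_pos s0)
  (A1 : limsup_finite (fun n => s1 n * sqrt (l (S n) / l n)))
  (A2 : limsup_finite (fun n => sm1 n * sqrt (l (pred n) / l n)))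
  (A3 : limsup_finite (fun n => Rabs (k n) / sqrt (l n)))
  (hrec : forall n, (1 <= n)%nat ->
     l n = x n * (s1 n * x (S n) + s0 n * x n + sm1 n * x (pred n)) + k n * x n) :
  liminf_finite (fun n => x n / sqrt (l n)) ->
  limsup_finite (fun n => x n / sqrt (l n)).
Proof.
  intros [m0 [N4 H4]].
  destruct A0 as [c0 [Hc0 [N0 H0]]].
  destruct A1 as [A [N1 H1]]. destruct A2 as [B [N2 H2]]. destruct A3 as [K [N3 H3]].
  set (m := Rabs m0).
  exists (Rmax 1 ((1 + (A+B)*m + K)/c0)).
  exists (S (S (N0 + N1 + N2 + N3 + N4))).
  intros n Hn.
  destruct n as [|n']; [lia|].
  assert (Hpos : forall j, (1 <= j)%nat -> 0 < sqrt (l j)) by (intros; apply sqrt_lt_R0; auto).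
  assert (Hm0 : forall j, (N4 <= j)%nat -> -m <= x j / sqrt (l j)).
  { intros j Hj. pose proof (H4 j Hj). pose proof (Rle_abs (-m0)). rewrite Rabs_Ropp in *. unfold m. lra. }
  set (n := S n') in *.
  assert (Hn1 : (1 <= n)%nat) by lia.
  assert (Hpn : (1 <= pred n)%nat) by (unfold n; simpl; lia).
  apply key with (y1 := x (S n) / sqrt (l (S n))) (y2 := x (pred n) / sqrt (l (pred n)))
    (a := s1 n * sqrt (l (S n) / l n)) (b := sm1 n * sqrt (l (pred n) / l n))
    (kk := k n / sqrt (l n)) (s0 := s0 n).
  - exact Hc0.
  - apply H0; lia.
  - apply Rmult_le_pos; [apply hs1; lia| apply sqrt_pos].
  - apply H1; lia.
  - apply Rmult_le_pos; [apply hsm1; lia| apply sqrt_pos].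
  - apply H2; lia.
  - pose proof (H3 n ltac:(lia)). simpl in H. unfold Rdiv in *. rewrite Rabs_mult, Rabs_inv.
    rewrite (Rabs_right (sqrt (l n))); [exact H|]. apply Rle_ge, sqrt_pos.
  - apply Rabs_pos.
  - apply Hm0; lia.
  - apply Hm0; unfold n; simpl; lia.
  - rewrite !sqrt_div_alt by (apply hl; lia).
    pose proof (Hpos n Hn1) as P0. pose proof (Hpos (S n) ltac:(lia)) as P1.
    pose proof (Hpos (pred n) Hpn) as P2.
    assert (Hs : sqrt (l n) * sqrt (l n) = l n) by (apply sqrt_sqrt; left; apply hl; lia).
    pose proof (hrec n Hn1) as E.
    set (S0 := sqrt (l n)) in *. set (S1 := sqrt (l (S n))) in *. set (S2 := sqrt (l (pred n))) in *.
    apply Rmult_eq_reg_l with (S0*S0); [|nra].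
    rewrite Rmult_1_r. rewrite Hs at 1. rewrite E at 1. field. lra.
Qed.

Theorem theorem6p1
  (l s0 s1 sm1 k x : nat -> R)
  (hl : forall n, (1 <= n)%nat -> 0 < l n)
  (hs0 : forall n, (1 <= n)%nat -> 0 < s0 n)
  (hs1 : forall n, (1 <= n)%nat -> 0 <= s1 n)
  (hsm1 : forall n, (1 <= n)%nat -> 0 <= sm1 n)
  (A0 : liminf_pos s0)
  (A1 : limsup_finite (fun n => s1 n * sqrt (l (S n) / l n)))
  (A2 : limsup_finite (fun n => sm1 n * sqrt (l (pred n) / l n)))
  (A3 : limsup_finite (fun n => Rabs (k n) / sqrt (l n)))
  (hrec : forall n, (1 <= n)%nat ->
     l n = x n * (s1 n * x (S n) + s0 n * x n + sm1 n * x (pred n)) + k n * x n) :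
  liminf_finite (fun n => x n / sqrt (l n)) <->
  limsup_finite (fun n => x n / sqrt (l n)).
Proof.
  split.
  - apply (dir l s0 s1 sm1 k x); assumption.
  - intros [M [N HM]].
    assert (H : limsup_finite (fun n => (fun j => - x j) n / sqrt (l n))).
    { apply (dir l s0 s1 sm1 (fun j => - k j) (fun j => - x j)); try assumption.
      - destruct A3 as [K [N3 H3]]. exists K, N3. intros n Hn.
        rewrite Rabs_Ropp. apply H3; exact Hn.
      - intros n Hn. rewrite (hrec n Hn). ring.
      - exists (-M), N. intros n Hn. pose proof (HM n Hn). simpl.
        unfold Rdiv in *. lra. }
    destruct H as [M' [N' HM']]. exists (-M'), N'. intros n Hn.
    pose proof (HM' n Hn). simpl in *. unfold Rdiv in *. lra.
Qed.
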